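(* Let $f:\{0,1\}^n\to\mathbb{R}$ be any function whose set of global maxima (optima) has size polynomial in $n$. Then the (1+1)~IA$^{\text{hyp}}$ using static hypermutation without FCM needs expected time exponential in $n$ (i.e. $e^{\Omega(n)}$) to find any of the optima.
   Context: The (1+1)~IA$^{\text{hyp}}$ maximises $f:\{0,1\}^n\to\mathbb{R}$: it initialises a single bit string $x$ uniformly at random; in each iteration it creates $y$ from $x$ by static hypermutation and replaces $x$ by $y$ if $f(y)\ge f(x)$. Static hypermutation has a constant parameter $0<c\le 1$ and mutation potential $M=cn$ (an integer). Without FCM (stop at first constructive mutation), static hypermutation creates $y$ by flipping exactly $M$ distinct bit positions of $x$ chosen uniformly at random. Time is measured in the number of iterations/fitness evaluations until an optimum is sampled. *)

(* Defs.v *)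
From HB Require Import structures.
From mathcomp Require Import all_boot all_order all_algebra.
From mathcomp Require Import all_classical all_reals all_analysis.
Set Implicit Arguments. Unset Strict Implicit. Unset Printing Implicit Defensive.
Import Order.TTheory GRing.Theory Num.Theory.
Local Open Scope ring_scope.

Definition bits (n : nat) := {ffun 'I_n -> bool}.

Definition flip n (x : bits n) (S : {set 'I_n}) : bits n :=
  [ffun i => if i \in S then ~~ x i else x i].

(* Static hypermutation without FCM: choose a set S of exactly M distinct
   positions uniformly at random (among the 'C(n,M) such sets) and flip them.
   hyp_prob n M x y = probability that the mutant of x is y. *)
Definition hyp_prob (R : realType) n (M : nat) (x y : bits n) : R :=
  #|[set S : {set 'I_n} | (#|S| == M) && (flip x S == y)]|%:R / ('C(n, M))%:R.

Definition optima (R : realType) n (f : bits n -> R) : {set bits n} :=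
  [set x | [forall y, f y <= f x]].

(* surv f M t x = probability that during the first t+1 fitness evaluations
   (the initial one plus t iterations) no optimum has been sampled AND the
   current search point after t iterations is x. *)
Fixpoint surv (R : realType) n (f : bits n -> R) (M : nat) (t : nat)
  : {ffun bits n -> R} :=
  match t with
  | 0 => [ffun x => if x \in optima f then 0 else (2%:R ^+ n)^-1]
  | t'.+1 => [ffun z =>
       \sum_(x : bits n) \sum_(y : bits n |
            (y \notin optima f) && (z == (if f x <= f y then y else x)))
          surv f M t' x * hyp_prob R M x y]
  end.

(* P(T > t), where T = number of fitness evaluations (the initial sample counts
   as evaluation 1, iteration i as evaluation i+1) until an optimum is sampled. *)
Definition prob_T_gt (R : realType) n (f : bits n -> R) (M : nat) (t : nat) : R :=
  match t with
  | 0 => 1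
  | t'.+1 => \sum_(x : bits n) surv f M t' x
  end.

(* Expected optimisation time E[T] = sum_{t >= 0} P(T > t), in the extended reals
   (it may be +oo). *)
Definition expected_time (R : realType) n (f : bits n -> R) (M : nat) : \bar R :=
  (\sum_(0 <= t <oo) (prob_T_gt f M t)%:E)%E.

(* Main.v *)
Require Import Defs.
From HB Require Import structures.
From mathcomp Require Import all_boot all_order all_algebra.
From mathcomp Require Import all_classical all_reals all_analysis.
From mathcomp Require Import ring lra.
Import Order.TTheory GRing.Theory Num.Theory.
Local Open Scope ring_scope.

Section Gen.
Variables (R : realType) (n : nat) (f : bits n -> R) (M : nat).

Definition gsel (x y : bits n) := if f x <= f y then y else x.

Lemma hyp_ge0 (x y : bits n) : 0 <= hyp_prob R M x y.
Proof. by rewrite /hyp_prob divr_ge0 // ler0n. Qed.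

Lemma surv_ge0 t (x : bits n) : 0 <= surv f M t x.
Proof.
elim: t x => [|t IH] x /=; rewrite ffunE.
  by case: ifP => // _; rewrite invr_ge0 exprn_ge0 // ler0n.
apply: sumr_ge0 => z _; apply: sumr_ge0 => y _; exact: mulr_ge0 (IH z) (hyp_ge0 _ _).
Qed.

Lemma sum_survS (P : pred (bits n)) t :
  \sum_(z | P z) surv f M t.+1 z =
  \sum_x surv f M t x * \sum_(y | (y \notin optima f) && P (gsel x y)) hyp_prob R M x y.
Proof.
under eq_bigr do rewrite ffunE.
rewrite exchange_big /=; apply: eq_bigr => x _.
rewrite mulr_sumr.
under eq_bigr do rewrite big_mkcond /=.
rewrite exchange_big /= [RHS]big_mkcond /=; apply: eq_bigr => y _.
case: (y \notin optima f) => /=; last by rewrite big1.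
rewrite -big_mkcondr /=.
case Pg: (P (gsel x y)).
  by rewrite (big_pred1 (gsel x y)) // => z /=; case: eqP => [->|]; rewrite ?Pg ?andbF.
by rewrite big_pred0 // => z /=; case: eqP => [->|]; rewrite ?Pg ?andbF.
Qed.

Lemma hyp_sum (x : bits n) : (M <= n)%N -> \sum_y hyp_prob R M x y = 1.
Proof.
move=> Mn.
rewrite /hyp_prob -mulr_suml -natr_sum.
have -> : (\sum_y #|[set S : {set 'I_n} | (#|S| == M) && (flip x S == y)]|)%N
        = #|[set S : {set 'I_n} | #|S| == M]|.
  rewrite -sum1_card (partition_big (flip x) predT) //=.
  apply: eq_bigr => y _; rewrite -sum1_card; apply: eq_bigl => S; by rewrite !inE.
rewrite card_draws card_ord divff // pnatr_eq0 -lt0n bin_gt0 //.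
Qed.

Lemma hyp_le (x y : bits n) : hyp_prob R M x y <= ('C(n, M))%:R^-1.
Proof.
rewrite /hyp_prob -[X in _ <= X]mul1r ler_wpM2r // ?invr_ge0 ?ler0n //.
have : (#|[set S : {set 'I_n} | (#|S| == M) && (flip x S == y)]| <= #|[set [set i | x i != y i]]|)%N.
  apply: subset_leq_card. apply/fintype.subsetP => S; rewrite !inE => /andP[_ /eqP <-].
  apply/eqP/setP => i; rewrite !inE ffunE; by case: (i \in S); case: (x i).
by rewrite cards1 => H; rewrite -[X in _ <= X](mulr1n 1) ler_nat.
Qed.

End Gen.
Arguments gsel {R n} f x y.
Arguments hyp_ge0 {R n} M x y.
Arguments surv_ge0 {R n} f M t x.
Arguments sum_survS {R n} f M P t.
Arguments hyp_sum {R n} M x.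
Arguments hyp_le {R n} M x y.
Section Q.
Variables (R : realType) (n : nat) (f : bits n -> R) (M : nat).
Hypothesis Mn : (M <= n)%N.

Let E : R := 2%:R ^+ n.
Let K : R := #|optima f|%:R.
Let p : R := K * ('C(n, M))%:R^-1.
Let Q t := \sum_(x : bits n) surv f M t x.

Lemma E_gt0 : 0 < E.
Proof. by rewrite /E exprn_gt0 // ltr0n. Qed.

Lemma sumE : \sum_(x : bits n) E^-1 = 1.
Proof.
rewrite sumr_const card_ffun card_bool card_ord -mulr_natr natrX mulVf //.
by rewrite gt_eqF // E_gt0.
Qed.

Lemma sumE_opt : \sum_(x : bits n | x \in optima f) E^-1 = K * E^-1.
Proof. by rewrite sumr_const mulr_natl. Qed.

Lemma Q0 : Q 0 = 1 - K * E^-1.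
Proof.
rewrite /Q (bigID (fun x => x \in optima f)) /=.
rewrite big1 => [|x xo]; last by rewrite ffunE xo.
have H := sumE; rewrite (bigID (fun x => x \in optima f)) /= sumE_opt in H.
rewrite add0r (_ : 1 - K * E^-1 = \sum_(x | x \notin optima f) E^-1); last first.
  by rewrite -H addrAC subrr add0r.
by apply: eq_bigr => x /negbTE xo; rewrite ffunE xo.
Qed.

Lemma w_bounds (x : bits n) :
  1 - p <= \sum_(y | (y \notin optima f) && predT (gsel f x y)) hyp_prob R M x y <= 1.
Proof.
have H := hyp_sum (R:=R) M x Mn; rewrite (bigID (fun y => y \in optima f)) /= in H.
have -> : \sum_(y | (y \notin optima f) && predT (gsel f x y)) hyp_prob R M x y
   = \sum_(y | y \notin optima f) hyp_prob R M x y.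
  by apply: eq_bigl => y; rewrite andbT.
move: H.
set A := \sum_(y | _ \in _) _; set B := \sum_(y | _) _ => H.
have A0 : 0 <= A by apply: sumr_ge0 => y _; exact: hyp_ge0.
have Ap : A <= p.
  rewrite /p /A /K.
  apply: (le_trans (ler_sum _ (fun y _ => hyp_le (R:=R) M x y))).
  by rewrite sumr_const mulr_natl.
apply/andP; split; lra.
Qed.

Lemma QS t : (1 - p) * Q t <= Q t.+1 <= Q t.
Proof.
have -> : Q t.+1 = \sum_(z | predT z) surv f M t.+1 z by [].
rewrite sum_survS /Q mulr_sumr; apply/andP; split; apply: ler_sum => x _;
  have /andP[w1 w2] := w_bounds x; have s0 := surv_ge0 f M t x.
  by rewrite mulrC ler_wpM2l.
by rewrite -[X in _ <= X]mulr1 ler_wpM2l.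
Qed.

Lemma p_ge0 : 0 <= p.
Proof. by rewrite /p divr_ge0 ?ler0n. Qed.

Lemma Qt t : Q t <= 1 /\ 1 - K * E^-1 - t%:R * p <= Q t.
Proof.
elim: t => [|t [IH1 IH2]].
  have hK : 0 <= K * E^-1 by rewrite /K mulr_ge0 ?ler0n // invr_ge0 ltW // E_gt0.
  rewrite Q0 mul0r subr0; split; lra.
have /andP[h1 h2] := QS t; have := p_ge0; rewrite -natr1; split; first exact: le_trans h2 IH1.
have q0 : 0 <= Q t by apply: sumr_ge0 => x _; exact: surv_ge0.
nra.
Qed.

End Q.
Arguments Qt {R n} f {M} Mn t.

Section One.
Variables (R : realType) (n : nat) (f : bits n -> R).

Let E : R := 2%:R ^+ n.
Let K : R := #|optima f|%:R.
Definition comp (x : bits n) := flip x [set: 'I_n].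
Definition good (x : bits n) := (x \notin optima f) && (comp x \notin optima f).

Lemma compK : cancel comp comp.
Proof. by move=> x; apply/ffunP => i; rewrite !ffunE finset.in_setT negbK. Qed.

Lemma hyp_comp (x : bits n) : hyp_prob R n x (comp x) = 1.
Proof.
rewrite /hyp_prob.
have -> : [set S : {set 'I_n} | (#|S| == n) && (flip x S == comp x)] = [set [set: 'I_n]].
  apply/setP => S; rewrite !inE; apply/idP/idP.
    case/andP => /eqP cS _; apply/eqP.
    by apply/eqP; rewrite eqEcard finset.subsetT cardsT card_ord cS leqnn.
  by move/eqP => ->; rewrite cardsT card_ord !eqxx.
by rewrite cards1 binn divff // pnatr_eq0.
Qed.

Lemma Phi_S t : \sum_(z | good z) surv f n t z <= \sum_(z | good z) surv f n t.+1 z.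
Proof.
rewrite sum_survS [X in X <= _]big_mkcond /=; apply: ler_sum => x _.
have s0 := surv_ge0 f n t x.
have W0 : 0 <= \sum_(y | (y \notin optima f) && good (gsel f x y)) hyp_prob R n x y.
  by apply: sumr_ge0 => y _; exact: hyp_ge0.
case: ifP => gx; last exact: mulr_ge0.
rewrite -[X in X <= _]mulr1 ler_wpM2l //.
rewrite (bigD1 (comp x)) /=.
  rewrite hyp_comp lerDl; apply: sumr_ge0 => y _; exact: hyp_ge0.
case/andP: (gx) => gx1 gx2; rewrite gx2 /=.
rewrite /gsel; case: ifP => _; rewrite /good ?compK.
  by rewrite gx1 gx2.
by rewrite gx1 gx2.
Qed.

Lemma Phi0 : 1 - 2%:R * K * E^-1 <= \sum_(z | good z) surv f n 0 z.
Proof.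
have -> : \sum_(z | good z) surv f n 0 z = \sum_z (if good z then E^-1 else 0).
  rewrite [LHS]big_mkcond /=; apply: eq_bigr => z _; rewrite ffunE.
  by case: ifP => //; rewrite /good => /andP[/negbTE -> _].
have H1 : \sum_(z : bits n) (if z \in optima f then E^-1 else 0) = K * E^-1.
  by rewrite -big_mkcond /= sumE_opt.
have H2 : \sum_(z : bits n) (if comp z \in optima f then E^-1 else 0) = K * E^-1.
  by rewrite -H1 (reindex_inj (can_inj compK)) /=; apply: eq_bigr => z _; rewrite compK.
have H3 : \sum_(z : bits n) E^-1 <= \sum_z ((if good z then E^-1 else 0) +
    (if z \in optima f then E^-1 else 0) + (if comp z \in optima f then E^-1 else 0)).
  apply: ler_sum => z _; have e0 : 0 <= E^-1 by rewrite invr_ge0 exprn_ge0 ?ler0n.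
  rewrite /good; case: (z \in optima f); case: (comp z \in optima f) => /=; lra.
rewrite !big_split /= H1 H2 sumE in H3.
lra.
Qed.

End One.
Arguments good {R n} f x.
Arguments Phi0 {R n} f.
Arguments Phi_S {R n} f t.

From mathcomp Require Import zify.

Lemma binom_lb_nat (n M : nat) : (M <= n)%N -> (n ^ M <= 'C(n, M) * M ^ M)%N.
Proof.
move=> Mn.
have key : forall m, (m <= M)%N -> (n ^ m * M ^_ m <= n ^_ m * M ^ m)%N.
  elim => [|m IH] hm; first by rewrite !ffactn0 !expn0.
  have IH' := IH (ltnW hm).
  rewrite !expnS !ffactnSr.
  have h2 : (n * (M - m) <= (n - m) * M)%N by nia.
  have := leq_mul IH' h2.
  by rewrite -!mulnA; move=> H; apply: (leq_trans _ (leq_trans H _)); apply/eqP; 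
     rewrite ?eqn_leq; nia.
have := key M (leqnn M).
rewrite ffactnn -bin_ffact => H.
by rewrite -(leq_pmul2r (fact_gt0 M)); apply: (leq_trans H); rewrite mulnAC.
Qed.

Lemma binom_lb_real (R : realType) (n M : nat) (c : R) :
  (0 < M)%N -> (M <= n)%N -> M%:R = c * n%:R ->
  expR (M%:R * ln c^-1) <= ('C(n, M))%:R.
Proof.
move=> M0 Mn hM.
have n0 : (0 < n)%N by apply: leq_trans Mn.
have nR : (0 : R) < n%:R by rewrite ltr0n.
have MR : (0 : R) < M%:R by rewrite ltr0n.
have ci : c^-1 = n%:R / M%:R.
  have c0 : c != 0 by apply/eqP => c0; move: MR; rewrite hM c0 mul0r ltxx.
  have n0' : (n%:R : R) != 0 by rewrite gt_eqF.
  by rewrite hM; field; rewrite n0' c0.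
have cpos : 0 < c^-1 by rewrite ci divr_gt0.
rewrite expRM_natl lnK; last by rewrite posrE.
rewrite ci expr_div_n ler_pdivrMr ?exprn_gt0 //.
have := binom_lb_nat n M Mn; rewrite -(ler_nat R) natrM !natrX; exact.
Qed.

Lemma poly_exp (R : realType) (s D : R) (k : nat) : 0 < s ->
  exists N : nat, forall n : nat, (N <= n)%N -> D * n%:R ^+ k <= expR (s * n%:R).
Proof.
move=> s0.
set sig := s ^+ k.+1 / (k.+1)`!%:R.
have sig0 : 0 < sig by rewrite divr_gt0 ?exprn_gt0 // ltr0n fact_gt0.
exists (Num.trunc (D / sig)).+1 => n hn.
have h1 := truncnS_gt (D / sig).
have hN : ((Num.trunc (D / sig)).+1%:R : R) <= n%:R by rewrite ler_nat.
have hD : D <= sig * n%:R.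
  rewrite -ler_pdivrMl // mulrC; apply: ltW; exact: lt_le_trans h1 hN.
have nk : (0 : R) <= n%:R ^+ k by rewrite exprn_ge0.
apply: (le_trans _ (expR_ge1Dxn k (mulr_ge0 (ltW s0) (ler0n _ n)))).
have -> : 1 + (s * n%:R) ^+ k.+1 / (k.+1)`!%:R = 1 + sig * n%:R ^+ k.+1.
  by rewrite /sig exprMn mulrAC.
rewrite exprS mulrA.
have := ler_wpM2r nk hD; lra.
Qed.

Section Glue.
Variables (R : realType) (n : nat) (f : bits n -> R) (M : nat).

Lemma prob_ge0 t : 0 <= prob_T_gt f M t.
Proof.
case: t => [|t] //=; apply: sumr_ge0 => x _; exact: surv_ge0.
Qed.

Lemma glue (q : R) (T : nat) : (forall t, (t < T)%N -> q <= prob_T_gt f M t) ->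
  ((T%:R * q)%:E <= expected_time f M)%E.
Proof.
move=> H; rewrite /expected_time.
have H2 := @nneseries_lim_ge R (fun t => (prob_T_gt f M t)%:E) (fun _ => true) 0 T
  (fun t _ _ => (eqbRL (lee_fin 0 _) (prob_ge0 t))).
apply: (le_trans _ H2).
rewrite sumEFin lee_fin.
have -> : T%:R * q = \sum_(0 <= i < T) q by rewrite sumr_const_nat subn0 mulr_natl.
by apply: ler_sum_nat => i /andP[_ hi]; apply: H.
Qed.

Lemma prob_lb_lt1 : (M <= n)%N -> forall t,
  1 - #|optima f|%:R * (2%:R ^+ n)^-1 - t%:R * (#|optima f|%:R * ('C(n, M))%:R^-1)
    <= prob_T_gt f M t.
Proof.
move=> Mn [|t] /=.
  have : 0 <= #|optima f|%:R * (2%:R ^+ n : R)^-1 by rewrite mulr_ge0 ?invr_ge0 ?exprn_ge0 ?ler0n.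
  rewrite mul0r; lra.
have [_ h] := Qt f Mn t.
have : 0 <= #|optima f|%:R * ('C(n, M)%:R : R)^-1 by rewrite mulr_ge0 ?invr_ge0 ?ler0n.
move: h; rewrite -natr1; lra.
Qed.

End Glue.

Lemma prob_lb_one (R : realType) n (f : bits n -> R) t :
  1 - 2%:R * #|optima f|%:R * (2%:R ^+ n)^-1 <= prob_T_gt f n t.
Proof.
case: t => [|t] /=.
  have : 0 <= #|optima f|%:R * (2%:R ^+ n : R)^-1 by rewrite mulr_ge0 ?invr_ge0 ?exprn_ge0 ?ler0n.
  lra.
apply: (le_trans (Phi0 f)).
have -> : \sum_x surv f n t x = \sum_x (if good f x then surv f n t x else 0) + 
    \sum_x (if good f x then 0 else surv f n t x).
  by rewrite -big_split /=; apply: eq_bigr => x _; case: ifP; rewrite ?addr0 ?add0r.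
rewrite -big_mkcond /=.
have h0 : 0 <= \sum_x (if good f x then 0 else surv f n t x).
  by apply: sumr_ge0 => x _; case: ifP => // _; exact: surv_ge0.
suff : \sum_(z | good f z) surv f n 0 z <= \sum_(x | good f x) surv f n t x by lra.
elim: t {h0} => [|t IH] //; exact: le_trans IH (Phi_S f t).
Qed.

Lemma final_step (R : realType) n (f : bits n -> R) M (a : R) :
  (forall t : nat, t%:R <= 2 * expR (a * n%:R) -> 1 / 2 <= prob_T_gt f M t) ->
  ((expR (a * n%:R))%:E <= expected_time f M)%E.
Proof.
move=> H.
set x := 2 * expR (a * n%:R).
have x0 : 0 <= x by rewrite mulr_ge0 ?expR_ge0.
apply: (le_trans _ (@glue R n f M (1 / 2) (Num.trunc x).+1 _)).
  rewrite lee_fin; have := truncnS_gt x; rewrite /x; lra.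
move=> t; rewrite ltnS truncn_ge_nat //; exact: H.
Qed.

Lemma pow2E (R : realType) (n : nat) : expR (ln (2%:R : R) * n%:R) = 2%:R ^+ n.
Proof. by rewrite mulrC expRM_natl lnK // posrE ltr0n. Qed.

Theorem theorem1 (R : realType) (c : R) (hc : 0 < c <= 1) (k : nat) (C : R) :
  exists a : R, 0 < a /\
  exists N : nat, forall (n M : nat), (N <= n)%N -> M%:R = c * n%:R ->
    forall f : bits n -> R, #|optima f|%:R <= C * n%:R ^+ k ->
      ((expR (a * n%:R))%:E <= expected_time f M)%E.
Proof.
case/andP: hc => c0 c1.
have ln20 : (0 : R) < ln 2%:R by rewrite ln_gt0 // ltr1n.
have [N1 HN1] := @poly_exp R _ (8 * C) k ln20.
move: c1; rewrite le_eqVlt => /orP[/eqP -> | clt1].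
  exists 1; split => //; exists N1 => n M hn hM f hK.
  have -> : M = n by apply/eqP; rewrite -(eqr_nat R) hM mul1r.
  apply: final_step => t _.
  have := @prob_lb_one R n f t.
  have := HN1 n hn; rewrite pow2E => h8.
  set E := (2%:R ^+ n : R) in h8 *.
  have E0 : 0 < E by rewrite exprn_gt0 // ltr0n.
  set K := #|optima f|%:R in hK *.
  have hu : 8 * (K * E^-1) <= 1.
    rewrite mulrA ler_pdivrMr // mul1r; lra.
  lra.
have ci1 : 1 < c^-1 by rewrite invf_gt1.
set L := c * ln c^-1.
have L0 : 0 < L by rewrite mulr_gt0 // ln_gt0.
have a0 : 0 < L / 2 by rewrite divr_gt0.
have [N2 HN2] := @poly_exp R _ (8 * C) k a0.
exists (L / 2); split => //; exists (maxn (maxn N1 N2) 1) => n M hn hM f hK.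
have hn1 : (N1 <= n)%N by apply: leq_trans hn; rewrite leq_max leq_maxl.
have hn2 : (N2 <= n)%N by apply: leq_trans hn; rewrite leq_max leq_maxr.
have hn0 : (0 < n)%N by apply: leq_trans hn; rewrite leq_maxr.
have nR : (0 : R) < n%:R by rewrite ltr0n.
have Mn : (M <= n)%N.
  by rewrite -(ler_nat R) hM -[X in _ <= X]mul1r ler_wpM2r // ltW.
have M0 : (0 < M)%N by rewrite -(ltr_nat R) hM mulr_gt0.
have hB := @binom_lb_real R n M c M0 Mn hM.
rewrite (_ : M%:R * ln c^-1 = L / 2 * n%:R + L / 2 * n%:R) in hB; last first.
  by rewrite hM /L; field.
rewrite expRD in hB.
apply: final_step => t ht.
have := @prob_lb_lt1 R n f M Mn t.
have := HN1 n hn1; rewrite pow2E => h8.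
have h8' := HN2 n hn2.
set e := expR (L / 2 * n%:R) in hB ht h8' *.
have e0 : 0 < e by apply: expR_gt0.
set E := (2%:R ^+ n : R) in h8 *.
have E0 : 0 < E by rewrite exprn_gt0 // ltr0n.
set B := ('C(n, M)%:R : R) in hB *.
have B0 : 0 < B by apply: lt_le_trans hB; rewrite mulr_gt0.
set K := #|optima f|%:R in hK *.
have K0 : 0 <= K by rewrite ler0n.
have hu : 8 * (K * E^-1) <= 1.
  rewrite mulrA ler_pdivrMr // mul1r; lra.
have hv : 8 * e * (K * B^-1) <= 1.
  rewrite mulrA ler_pdivrMr // mul1r.
  apply: le_trans hB; have h8K : 8 * K <= e by lra.
  nra.
have v0 : 0 <= K * B^-1 by rewrite mulr_ge0 // invr_ge0 ltW.
have t0 : (0 : R) <= t%:R by rewrite ler0n.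
have : t%:R * (K * B^-1) <= 2 * e * (K * B^-1) by rewrite ler_wpM2r.
lra.
Qed.
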